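(* Let $X$ be a Banach space as described in the context, let $f\in X$ not be a polynomial, and suppose there exists a sequence $p_n\in\mathcal{P}_n[\mathbb{Z}]$ with $\lim_{n\to\infty}\|f-p_n\|=0$. Then the radius of convergence of the Taylor series of $f$ in powers of $z$ is at most $1$.
   Context: $\mathbb{D}=\{z\in\mathbb{C}:|z|<1\}$. $X$ is a complex Banach space of functions analytic in $\mathbb{D}$ whose norm $\|\cdot\|$ satisfies: (i) $\|f(\cdot\, e^{it})\|=\|f(\cdot)\|$ for all $t\in\mathbb{R}$ and $f\in X$; (ii) $\|f\|<\infty$ for every entire function $f$; (iii) for all $f\in X$ and $g\in L[0,2\pi]$, $\big\|\frac{1}{2\pi}\int_0^{2\pi} f(ze^{it})g(t)\,dt\big\|\le \frac{1}{2\pi}\int_0^{2\pi}|g(t)|\,dt\cdot\|f\|$. A complex number is called an integer if its real and imaginary parts are integers; $\mathcal{P}_n[\mathbb{Z}]$ is the set of complex polynomials of degree at most $n-1$ with integer coefficients in this sense. *)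

(* Defs.v *)
From HB Require Import structures.
From mathcomp Require Import all_boot all_order all_algebra.
From mathcomp Require Import complex.
From mathcomp Require Import all_classical all_reals all_analysis.
Set Implicit Arguments. Unset Strict Implicit. Unset Printing Implicit Defensive.
Import Order.TTheory GRing.Theory Num.Theory.
Local Open Scope ring_scope.
Local Open Scope classical_set_scope.

Section Defs.
Variable R : realType.
Local Notation C := R[i].

Definition cabs (z : C) : R := Num.sqrt (complex.Re z ^+ 2 + complex.Im z ^+ 2).
Definition ofR (x : R) : C := (x +i* 0)%C.
Definition cis (t : R) : C := (cos t +i* sin t)%C.
Definition disc : set C := [set z | cabs z < 1].

Definition ccvg (u : nat -> C) (l : C) : Prop :=
  (fun n => cabs (u n - l)) @ \oo --> 0%R.

Definition power_series_on (a : nat -> C) (f : C -> C) (A : set C) : Prop :=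
  forall z, A z -> ccvg (fun n => \sum_(k < n) a k * z ^+ k) (f z).

(* f analytic in D (equivalently: its Taylor series at 0 converges to it on D) *)
Definition analytic_in_disc (f : C -> C) : Prop :=
  exists a, power_series_on a f disc.

Definition entire (f : C -> C) : Prop := exists a, power_series_on a f setT.

Definition conv_radius (a : nat -> C) : \bar R :=
  ereal_sup [set r%:E | r in
    [set r : R | 0 <= r /\ exists M : R, forall k, cabs (a k) * r ^+ k <= M]].

Definition Iv : set R := `[0, 2 * pi]%classic.
Definition cint (h : R -> C) : C :=
  (Rintegral (@lebesgue_measure R) Iv (fun t => complex.Re (h t))
   +i* Rintegral (@lebesgue_measure R) Iv (fun t => complex.Im (h t)))%C.

Definition L1 (g : R -> C) : Prop :=
  (@lebesgue_measure R).-integrable Iv (EFin \o (fun t => complex.Re (g t))) /\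
  (@lebesgue_measure R).-integrable Iv (EFin \o (fun t => complex.Im (g t))).

Record BanachFunSpace (X : set (C -> C)) (nrm : (C -> C) -> R) : Prop := {
  bfs_analytic : forall f, X f -> analytic_in_disc f;
  (* elements are functions on D: only the values on D matter *)
  bfs_local : forall f g, (forall z, disc z -> f z = g z) ->
                (X f <-> X g) /\ nrm f = nrm g;
  bfs_zero : X (fun _ => 0);
  bfs_add : forall f g, X f -> X g -> X (fun z => f z + g z);
  bfs_scale : forall (c : C) f, X f -> X (fun z => c * f z);
  bfs_ge0 : forall f, X f -> 0 <= nrm f;
  bfs_eq0 : forall f, X f -> nrm f = 0 -> forall z, disc z -> f z = 0;
  bfs_homog : forall (c : C) f, X f -> nrm (fun z => c * f z) = cabs c * nrm f;
  bfs_triangle : forall f g, X f -> X g ->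
                   nrm (fun z => f z + g z) <= nrm f + nrm g;
  bfs_complete : forall u : nat -> C -> C, (forall n, X (u n)) ->
    (forall e : R, 0 < e -> exists N, forall m n, (N <= m)%N -> (N <= n)%N ->
        nrm (fun z => u m z - u n z) < e) ->
    exists f, X f /\ (fun n => nrm (fun z => u n z - f z)) @ \oo --> 0%R
}.

Definition rot_invariant (X : set (C -> C)) (nrm : (C -> C) -> R) : Prop :=
  forall (t : R) f, X f ->
    X (fun z => f (z * cis t)) /\ nrm (fun z => f (z * cis t)) = nrm f.

(* (ii) every entire function has finite norm, i.e. belongs to X *)
Definition contains_entire (X : set (C -> C)) : Prop :=
  forall f, entire f -> X f.

Definition conv_ineq (X : set (C -> C)) (nrm : (C -> C) -> R) : Prop :=
  forall f g, X f -> L1 g ->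
    let h := fun z => ofR (2 * pi)^-1 * cint (fun t => f (z * cis t) * g t) in
    X h /\
    nrm h <= (2 * pi)^-1 * Rintegral (@lebesgue_measure R) Iv (fun t => cabs (g t))
             * nrm f.

(* P_n[Z]: polynomials of degree <= n-1 with Gaussian integer coefficients *)
Definition int_poly (n : nat) (p : {poly C}) : Prop :=
  (size p <= n)%N /\
  forall i, complex.Re p`_i \is a Num.int /\ complex.Im p`_i \is a Num.int.

Definition is_poly_on_disc (f : C -> C) : Prop :=
  exists q : {poly C}, forall z, disc z -> f z = q.[z].

End Defs.

(* Main.v *)
Require Import Defs.
From HB Require Import structures.
From mathcomp Require Import all_boot all_order all_algebra.
From mathcomp Require Import complex.
From mathcomp Require Import all_classical all_reals all_analysis.
From mathcomp Require Import ring lra.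
From mathcomp Require measurable_realfun.
Import Order.TTheory GRing.Theory Num.Theory.
Local Open Scope ring_scope.
Local Open Scope classical_set_scope.

Module M1.
Import ComplexField.
Local Open Scope ring_scope.
Local Open Scope classical_set_scope.
Local Open Scope complex_scope.
Section Aux.
Variable R : realType.
Local Notation C := R[i].
Implicit Types (z w : C) (x y t : R).

Lemma cabsC z : (cabs z)%:C = `|z|.
Proof. by case: z => a b; rewrite normc_def. Qed.

Lemma cabsE z : cabs z = complex.Re `|z|.
Proof. by rewrite -cabsC. Qed.

Lemma cabs_ge0 z : 0 <= cabs z.
Proof. by rewrite /cabs sqrtr_ge0. Qed.

Lemma cabsM z w : cabs (z * w) = cabs z * cabs w.
Proof. by apply: complexI; rewrite rmorphM /= !cabsC normrM. Qed.

Lemma cabsD z w : cabs (z + w) <= cabs z + cabs w.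
Proof. by rewrite -lecR rmorphD /= !cabsC ler_normD. Qed.

Lemma cabsN z : cabs (- z) = cabs z.
Proof. by apply: complexI; rewrite !cabsC normrN. Qed.

Lemma cabsB z w : cabs (z - w) = cabs (w - z).
Proof. by rewrite -cabsN opprB. Qed.

Lemma cabs0 : cabs (0 : C) = 0.
Proof. by apply: complexI; rewrite cabsC normr0. Qed.

Lemma cabs_eq0 z : cabs z = 0 -> z = 0.
Proof. by move=> h; apply/eqP; rewrite -normr_eq0 -cabsC h. Qed.

Lemma cabsX z n : cabs (z ^+ n) = cabs z ^+ n.
Proof. by apply: complexI; rewrite rmorphXn /= !cabsC normrX. Qed.

Lemma Re_le z : `|complex.Re z| <= cabs z.
Proof.
case: z => a b; rewrite /cabs /=; rewrite -(sqrtr_sqr a) ler_sqrt ?lerDl ?sqr_ge0//.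
by rewrite addr_ge0 ?sqr_ge0.
Qed.

Lemma Im_le z : `|complex.Im z| <= cabs z.
Proof.
case: z => a b; rewrite /cabs /=; rewrite -(sqrtr_sqr b) ler_sqrt ?lerDr ?sqr_ge0//.
by rewrite addr_ge0 ?sqr_ge0.
Qed.

Lemma cabs_ofR x : 0 <= x -> cabs (ofR x) = x.
Proof. by move=> h; rewrite /cabs /= expr0n /= addr0 sqrtr_sqr ger0_norm. Qed.

Lemma cisD x y : cis (x + y) = cis x * cis y.
Proof. by rewrite /cis sinD cosD; apply/eqP; rewrite eq_complex /= !eqxx /= addrC. Qed.

Lemma cis0 : cis (0 : R) = 1.
Proof. by rewrite /cis sin0 cos0. Qed.

Lemma cabs_cis x : cabs (cis x) = 1.
Proof. by rewrite /cabs /= cos2Dsin2 sqrtr1. Qed.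

Lemma cisX x n : cis x ^+ n = cis (n%:R * x).
Proof.
elim: n => [|n IH]; first by rewrite expr0 mul0r cis0.
by rewrite exprSr IH -cisD mulrSr mulrDl mul1r.
Qed.

End Aux.

End M1.

Module M2.
Import M1.
Import numFieldNormedType.Exports.
Local Open Scope ring_scope.
Local Open Scope classical_set_scope.
Section Aux2.
Variable R : realType.
Local Notation C := R[i].
Local Notation mu := (@lebesgue_measure R).
Implicit Types (z w : C) (x y t r : R).

Lemma pi2_gt0 : 0 < 2 * pi :> R.
Proof. by rewrite mulr_gt0 ?pi_gt0. Qed.

Lemma mIv : measurable (@Iv R).
Proof. exact: measurable_itv. Qed.

Lemma muIv : mu (@Iv R) = (2 * pi)%:E.
Proof. by rewrite /Iv lebesgue_measure_itv /= lte_fin pi2_gt0 oppr0 adde0. Qed.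

Lemma cont_int (h : R -> R) : continuous h -> mu.-integrable (@Iv R) (EFin \o h).
Proof.
move=> ch; apply: continuous_compact_integrable; first exact: segment_compact.
exact: continuous_subspaceT.
Qed.

Lemma is_derive_lin r t : is_derive t 1 ( *%R r) r.
Proof.
have -> : ( *%R r) = r \*: (@id R) by apply/funext => u.
by apply: is_derive_eq; exact: mulr1.
Qed.

Lemma is_derive_sinr r t : is_derive t 1 (fun u => sin (r * u)) (cos (r * t) * r).
Proof.
have -> : (fun u => sin (r * u)) = sin \o ( *%R r) by [].
exact: (is_derive1_comp (is_derive_sin _) (is_derive_lin r t)).
Qed.

Lemma is_derive_cosr r t : is_derive t 1 (fun u => cos (r * u)) (- sin (r * t) * r).
Proof.
have -> : (fun u => cos (r * u)) = cos \o ( *%R r) by [].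
exact: (is_derive1_comp (is_derive_cos _) (is_derive_lin r t)).
Qed.

Lemma der_cont (f df : R -> R) : (forall t, is_derive t 1 f (df t)) -> continuous f.
Proof.
move=> h t; apply/differentiable_continuous/derivable1_diffP.
by case: (h t).
Qed.

Lemma cont_cosr r : continuous (fun u : R => cos (r * u)).
Proof. exact: (@der_cont _ (fun t => - sin (r * t) * r) (is_derive_cosr r)). Qed.

Lemma cont_sinr r : continuous (fun u : R => sin (r * u)).
Proof. exact: (@der_cont _ (fun t => cos (r * t) * r) (is_derive_sinr r)). Qed.

Lemma is_derive_F1 r t : r != 0 ->
  is_derive t 1 (fun u => r^-1 * sin (r * u)) (cos (r * t)).
Proof.
move=> r0.
have -> : (fun u => r^-1 * sin (r * u)) = r^-1 \*: (fun u => sin (r * u)).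
  by apply/funext => u.
have := is_deriveZ r^-1 (is_derive_sinr r t).
move=> /is_derive_eq; apply.
by rewrite [_ * r]mulrC /GRing.scale /= mulrA mulVf // mul1r.
Qed.

Lemma is_derive_F2 r t : r != 0 ->
  is_derive t 1 (fun u => - (r^-1 * cos (r * u))) (sin (r * t)).
Proof.
move=> r0.
have -> : (fun u => - (r^-1 * cos (r * u))) = (- r^-1) \*: (fun u => cos (r * u)).
  by apply/funext => u; rewrite -mulNr.
have := is_deriveZ (- r^-1) (is_derive_cosr r t).
move=> /is_derive_eq; apply.
by rewrite [_ * r]mulrC /GRing.scale /= mulrN mulrNN mulrA mulVf // mul1r.
Qed.

Lemma FTC_aux (f F : R -> R) : (forall t, is_derive t 1 F (f t)) -> continuous f ->
  (\int[mu]_(x in @Iv R) f x = F (2 * pi) - F 0).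
Proof.
move=> dF cf.
rewrite /Rintegral /Iv (@continuous_FTC2 _ f F 0 (2 * pi) pi2_gt0) //.
- exact: continuous_subspaceT.
- have cF := @der_cont F f dF.
  split.
  + by move=> x _; case: (dF x).
  + by apply: cvg_at_right_filter; exact: cF.
  + by apply: cvg_at_left_filter; exact: cF.
- by move=> x _; rewrite derive1E; case: (dF x).
Qed.

Lemma int_cosr r : r != 0 -> sin (r * (2 * pi)) = 0 ->
  \int[mu]_(x in @Iv R) cos (r * x) = 0.
Proof.
move=> r0 h; rewrite (@FTC_aux (fun t => cos (r * t)) _ (fun t => is_derive_F1 r t r0)); last first.
  exact: cont_cosr.
by rewrite /= h mulr0 [r * 0]mulr0 sin0 mulr0 subrr.
Qed.

Lemma int_sinr r : r != 0 -> cos (r * (2 * pi)) = 1 ->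
  \int[mu]_(x in @Iv R) sin (r * x) = 0.
Proof.
move=> r0 h; rewrite (@FTC_aux (fun t => sin (r * t)) _ (fun t => is_derive_F2 r t r0)); last first.
  exact: cont_sinr.
by rewrite /= h mulr0 cos0 subrr.
Qed.

End Aux2.

End M2.

Module M3.
Import M1 M2.
Import numFieldNormedType.Exports.
Local Open Scope ring_scope.
Local Open Scope classical_set_scope.
Section Aux3.
Variable R : realType.
Local Notation C := R[i].
Local Notation mu := (@lebesgue_measure R).
Implicit Types (z w : C) (x y t r : R).
Local Notation Re := complex.Re.
Local Notation Im := complex.Im.

Lemma ReD z w : Re (z + w) = Re z + Re w. Proof. by case: z w => ? ? []. Qed.
Lemma ImD z w : Im (z + w) = Im z + Im w. Proof. by case: z w => ? ? []. Qed.
Lemma ReN z : Re (- z) = - Re z. Proof. by case: z. Qed.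
Lemma ImN z : Im (- z) = - Im z. Proof. by case: z. Qed.
Lemma ReM z w : Re (z * w) = Re z * Re w - Im z * Im w. Proof. by case: z w => ? ? []. Qed.
Lemma ImM z w : Im (z * w) = Re z * Im w + Im z * Re w. Proof. by case: z w => ? ? []. Qed.

Definition ccont (h : R -> C) :=
  continuous (fun t => Re (h t)) /\ continuous (fun t => Im (h t)).

Lemma contD (f g : R -> R) : continuous f -> continuous g -> continuous (fun t => f t + g t).
Proof. by move=> cf cg t; exact: (continuousD (cf t) (cg t)). Qed.
Lemma contM (f g : R -> R) : continuous f -> continuous g -> continuous (fun t => f t * g t).
Proof. by move=> cf cg t; exact: (continuousM (cf t) (cg t)). Qed.
Lemma contN (f : R -> R) : continuous f -> continuous (fun t => - f t).
Proof. by move=> cf t; exact: (continuousN (cf t)). Qed.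
Lemma contB (f g : R -> R) : continuous f -> continuous g -> continuous (fun t => f t - g t).
Proof. by move=> cf cg; apply: contD => //; apply: contN. Qed.
Lemma contC (c : R) : continuous (fun _ : R => c).
Proof. exact: cst_continuous. Qed.

Lemma ccontD h1 h2 : ccont h1 -> ccont h2 -> ccont (fun t => h1 t + h2 t).
Proof.
move=> [r1 i1] [r2 i2]; split.
  have -> : (fun t => Re (h1 t + h2 t)) = (fun t => Re (h1 t) + Re (h2 t)).
    by apply/funext => t; rewrite ReD.
  exact: contD.
have -> : (fun t => Im (h1 t + h2 t)) = (fun t => Im (h1 t) + Im (h2 t)).
  by apply/funext => t; rewrite ImD.
exact: contD.
Qed.

Lemma ccontM h1 h2 : ccont h1 -> ccont h2 -> ccont (fun t => h1 t * h2 t).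
Proof.
move=> [r1 i1] [r2 i2]; split.
  have -> : (fun t => Re (h1 t * h2 t)) = (fun t => Re (h1 t) * Re (h2 t) - Im (h1 t) * Im (h2 t)).
    by apply/funext => t; rewrite ReM.
  by apply: contB; apply: contM.
have -> : (fun t => Im (h1 t * h2 t)) = (fun t => Re (h1 t) * Im (h2 t) + Im (h1 t) * Re (h2 t)).
  by apply/funext => t; rewrite ImM.
by apply: contD; apply: contM.
Qed.

Lemma ccontC c : ccont (fun _ => c).
Proof. by split; apply: contC. Qed.

Lemma ccont_cis r : ccont (fun t => cis (r * t)).
Proof. by split; [exact: cont_cosr | exact: cont_sinr]. Qed.

Lemma ccont_sum n (h : nat -> R -> C) : (forall m, ccont (h m)) ->
  ccont (fun t => \sum_(m < n) h m t).
Proof.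
move=> hc; elim: n => [|n IH].
  have -> : (fun t => \sum_(m < 0) h m t) = (fun _ => 0) by apply/funext => t; rewrite big_ord0.
  exact: ccontC.
have -> : (fun t => \sum_(m < n.+1) h m t) = (fun t => \sum_(m < n) h m t + h n t).
  by apply/funext => t; rewrite big_ord_recr.
exact: ccontD.
Qed.

Lemma cintD h1 h2 : ccont h1 -> ccont h2 ->
  cint (fun t => h1 t + h2 t) = cint h1 + cint h2.
Proof.
move=> [r1 i1] [r2 i2]; rewrite /cint.
under eq_Rintegral do rewrite ReD.
under [X in (_ +i* X)%C]eq_Rintegral do rewrite ImD.
rewrite RintegralD //; try exact: cont_int; last exact: measurable_itv.
rewrite RintegralD //; try exact: cont_int; exact: measurable_itv.
Qed.

Lemma mIv' : measurable (@Iv R).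
Proof. exact: measurable_itv. Qed.

Lemma cintZ c h : ccont h -> cint (fun t => c * h t) = c * cint h.
Proof.
move=> [rh ih]; rewrite /cint.
under eq_Rintegral do rewrite ReM.
under [X in (_ +i* X)%C]eq_Rintegral do rewrite ImM.
rewrite RintegralB; first last.
- by apply: cont_int; apply: contM => //; apply: contC.
- by apply: cont_int; apply: contM => //; apply: contC.
- exact: mIv'.
rewrite RintegralD; first last.
- by apply: cont_int; apply: contM => //; apply: contC.
- by apply: cont_int; apply: contM => //; apply: contC.
- exact: mIv'.
rewrite !RintegralZl //; try exact: mIv'; try exact: cont_int.
by case: c.
Qed.

Lemma cint0 : cint (fun _ : R => 0 : C) = 0.
Proof.
rewrite /cint /= Rintegral_cst; last exact: mIv'.
by rewrite mul0r.
Qed.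

Lemma cint_ext h1 h2 : (forall t, h1 t = h2 t) -> cint h1 = cint h2.
Proof. by move=> e; congr cint; apply/funext. Qed.

Lemma cint_sum n (h : nat -> R -> C) : (forall m, ccont (h m)) ->
  cint (fun t => \sum_(m < n) h m t) = \sum_(m < n) cint (h m).
Proof.
move=> hc; elim: n => [|n IH].
  by rewrite big_ord0 -[RHS]cint0; apply: cint_ext => t; rewrite big_ord0.
rewrite big_ord_recr /= -IH -cintD; last exact: hc; last exact: ccont_sum.
by apply: cint_ext => t; rewrite big_ord_recr.
Qed.

Lemma cint_one : cint (fun _ : R => 1 : C) = ofR (2 * pi).
Proof.
rewrite /cint /= !Rintegral_cst; try exact: mIv'.
rewrite [fine _](_ : _ = 2 * pi); last exact: (congr1 fine (muIv R)).
by rewrite mul1r mul0r.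
Qed.

Lemma cint_cis0 r : r != 0 -> sin (r * (2 * pi)) = 0 -> cos (r * (2 * pi)) = 1 ->
  cint (fun t => cis (r * t)) = 0.
Proof.
move=> r0 hs hc; rewrite /cint /= int_cosr // int_sinr //.
Qed.

End Aux3.

End M3.

Module M4.
Import M1 M2 M3.
Import numFieldNormedType.Exports.
Local Open Scope ring_scope.
Local Open Scope classical_set_scope.
Section Aux4.
Variable R : realType.
Local Notation C := R[i].
Local Notation mu := (@lebesgue_measure R).
Implicit Types (z w : C) (x y t r : R).
Local Notation Re := complex.Re.
Local Notation Im := complex.Im.

Lemma dct (u : nat -> R -> R) (v : R -> R) (B c : R) (N : nat) :
  (forall n, continuous (u n)) -> (forall t, u ^~ t @ \oo --> v t) ->
  (forall n t, `|u n t| <= B) ->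
  (forall n, (N <= n)%N -> \int[mu]_(x in @Iv R) u n x = c) ->
  \int[mu]_(x in @Iv R) v x = c.
Proof.
move=> cu uv uB uc.
have mu_ n := measurable_int _ (@cont_int R _ (cu n)).
have mv' := measurable_realfun.measurable_fun_cvg (fun m => proj1 (measurable_realfun.measurable_EFinP _ _) (mu_ m)) (fun t _ => uv t).
have mv := proj2 (measurable_realfun.measurable_EFinP _ _) mv'.
have ff : forall x, (@Iv R) x -> (EFin \o u n) x @[n --> \oo] --> (EFin \o v) x.
  move=> t _; apply: cvg_EFin; first exact: nearW.
  exact: uv.
have fg : forall x n, (@Iv R) x -> (`|(EFin \o u n) x| <= (cst B%:E) x)%E.
  by move=> t n _ /=; rewrite lee_fin.
have ig := @cont_int R (fun _ => B) (contC R B).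
have mI : measurable ((@Iv R) : set (measurableTypeR R)) by exact: measurable_itv.
have ff2 : {ae (@lebesgue_measure R), forall x : measurableTypeR R,
    (@Iv R) x -> (EFin \o u n) x @[n --> \oo] --> (EFin \o v) x}.
  exact: aeW.
have fg2 : {ae (@lebesgue_measure R), forall (x : measurableTypeR R) n,
    (@Iv R) x -> (`|(EFin \o u n) x| <= (cst B%:E) x)%E}.
  exact: aeW.
have [iv _ cvgI] := dominated_convergence mI mu_ mv ff2 ig fg2.
have cst_c : [sequence (\int[lebesgue_measure]_(x in @Iv R) (EFin \o u n) x)%E]_n @ \oo --> c%:E.
  apply: cvg_near_cst; exists N => // n /= Nn.
  rewrite -(uc n Nn) /Rintegral fineK //.
  exact: (integrable_fin_num mI (@cont_int R _ (cu n))).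
have e := @cvg_unique _ (@ereal_hausdorff R) _ _ _ _ cvgI cst_c.
by rewrite /Rintegral; move: e => /= ->.
Qed.

End Aux4.

End M4.

Module M5.
Import M1 M2 M3 M4.
Import numFieldNormedType.Exports.
Local Open Scope ring_scope.
Local Open Scope classical_set_scope.
Section Aux5.
Variable R : realType.
Local Notation C := R[i].
Local Notation mu := (@lebesgue_measure R).
Implicit Types (z w : C) (x y t r : R).
Local Notation Re := complex.Re.
Local Notation Im := complex.Im.

Lemma nat2piE (m : nat) : m%:R * (2 * pi) = 0 + (pi *+ 2) *+ m :> R.
Proof. by rewrite add0r mulr_natl mulr_natl. Qed.

Lemma sin_nat2pi (m : nat) : sin (m%:R * (2 * pi)) = 0 :> R.
Proof. by rewrite nat2piE (periodicn (@sinD2pi R)) sin0. Qed.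

Lemma cos_nat2pi (m : nat) : cos (m%:R * (2 * pi)) = 1 :> R.
Proof. by rewrite nat2piE (periodicn (@cosD2pi R)) cos0. Qed.

Lemma cint_mono (c : C) (m k : nat) :
  cint (fun t => c * cis ((m%:R - k%:R) * t)) =
  if m == k then c * ofR (2 * pi) else 0.
Proof.
rewrite cintZ; last exact: ccont_cis.
case: eqP => [->|mk].
  rewrite subrr -cint_one; congr (_ * _); apply: cint_ext => t.
  by rewrite mul0r cis0.
rewrite cint_cis0 ?mulr0 //.
- by rewrite subr_eq0 eqr_nat; apply/eqP.
- by rewrite mulrBl sinB !sin_nat2pi !cos_nat2pi !mul0r !mulr0 subrr.
- by rewrite mulrBl cosB !sin_nat2pi !cos_nat2pi !mulr0 mulr1 addr0.
Qed.

Lemma geom_bound (q : R) n : 0 <= q < 1 -> \sum_(m < n) q ^+ m <= (1 - q)^-1.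
Proof.
case/andP => q0 q1.
have h : (\sum_(m < n) q ^+ m) * (1 - q) = 1 - q ^+ n.
  elim: n => [|n IH]; first by rewrite big_ord0 mul0r expr0 subrr.
  by rewrite big_ord_recr /= mulrDl IH exprSr; ring.
rewrite -[X in _ <= X]mul1r ler_pdivlMr ?subr_gt0 // h lerBlDr lerDl exprn_ge0 //.
Qed.

Lemma cvg_small {u : nat -> R} : u @ \oo --> 0 -> forall e, 0 < e ->
  exists N, forall n, (N <= n)%N -> `|u n| < e.
Proof.
move=> /cvgrPdist_lt h e e0; have [N _ HN] := h e e0.
by exists N => n Nn; have := HN n Nn; rewrite sub0r normrN.
Qed.

Lemma le_sum_term (f : nat -> R) N m : (m < N)%N -> (forall j, 0 <= f j) ->
  f m <= \sum_(j < N) f j.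
Proof.
move=> mN f0; elim: N mN => [//|N IH].
rewrite ltnS leq_eqVlt => /orP[/eqP ->|mN].
  by rewrite big_ord_recr /= lerDr sumr_ge0.
by rewrite big_ord_recr /= (le_trans (IH mN)) // lerDl.
Qed.

Lemma abel_bound (b : nat -> C) (F : C -> C) z : power_series_on b F (@disc R) ->
  cabs z < 1 -> exists B, forall n, \sum_(m < n) cabs (b m) * cabs z ^+ m <= B.
Proof.
move=> hps z1.
set rho := cabs z; set s := (1 + rho) / 2.
have rho0 : 0 <= rho by apply: cabs_ge0.
have s0 : 0 < s by rewrite /s; lra.
have z1r : rho < 1 := z1.
have s1 : s < 1 by rewrite /s; lra.
have rhos : rho < s by rewrite /s; lra.
set w := ofR s.
have cw : cabs w = s by rewrite cabs_ofR // (ltW s0).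
have dw : disc w by rewrite /disc /= cw.
have [N HN] := cvg_small (hps w dw) 1 ltr01.
set P := fun n => \sum_(k < n) b k * w ^+ k.
set T := 2 + \sum_(j < N) cabs (b j) * s ^+ j.
have T0 : 0 <= T.
  by rewrite addr_ge0 // sumr_ge0 // => j _; rewrite mulr_ge0 ?cabs_ge0 // exprn_ge0 // ltW.
have hT : forall m, cabs (b m) * s ^+ m <= T.
  move=> m.
  have e : cabs (b m) * s ^+ m = cabs (P m.+1 - P m).
    by rewrite /P big_ord_recr /= addrC addrK cabsM cabsX cw.
  case: (leqP N m) => [Nm | mN].
    rewrite e (_ : P m.+1 - P m = (P m.+1 - F w) + (F w - P m)); last first.
      by rewrite addrA subrK.
    apply: (le_trans (cabsD _ _ _)).
    have h1 := HN m.+1 (leqW Nm); have h2 := HN m Nm.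
    rewrite ger0_norm ?cabs_ge0 // in h1; rewrite ger0_norm ?cabs_ge0 // cabsB in h2.
    have S0 : 0 <= \sum_(j < N) cabs (b j) * s ^+ j.
      by rewrite sumr_ge0 // => j _; rewrite mulr_ge0 ?cabs_ge0 // exprn_ge0 // ltW.
    rewrite /T; apply: (le_trans (ltW (ltrD h1 h2))); lra.
  have H : cabs (b m) * s ^+ m <= \sum_(j < N) cabs (b j) * s ^+ j.
    apply: (@le_sum_term (fun j => cabs (b j) * s ^+ j)) => // j.
    by rewrite mulr_ge0 ?cabs_ge0 // exprn_ge0 // ltW.
  rewrite /T; lra.
set q := rho / s.
have q0 : 0 <= q by rewrite divr_ge0 // ltW.
have q1 : q < 1 by rewrite /q ltr_pdivrMr // mul1r.
exists (T * (1 - q)^-1) => n.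
apply: (le_trans (y := \sum_(m < n) T * q ^+ m)).
  apply: ler_sum => m _.
  have -> : rho ^+ m = s ^+ m * q ^+ m by rewrite -exprMn /q mulrC divfK // gt_eqF.
  by rewrite mulrA ler_wpM2r // exprn_ge0.
by rewrite -mulr_sumr ler_wpM2l // geom_bound // q0 q1.
Qed.


End Aux5.

End M5.

Module M6.
Import M1 M2 M3 M4 M5.
Import numFieldNormedType.Exports.
Local Open Scope ring_scope.
Local Open Scope classical_set_scope.
Section Aux6.
Variable R : realType.
Local Notation C := R[i].
Local Notation mu := (@lebesgue_measure R).
Implicit Types (z w : C) (x y t r : R).
Local Notation Re := complex.Re.
Local Notation Im := complex.Im.

Lemma cabs_sum n (f : nat -> C) : cabs (\sum_(m < n) f m) <= \sum_(m < n) cabs (f m).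
Proof.
elim: n => [|n IH]; first by rewrite !big_ord0 cabs0.
rewrite !big_ord_recr /=; apply: (le_trans (cabsD _ _ _)); exact: lerD.
Qed.

Lemma sum_if n (k : nat) (c : nat -> C) : \sum_(m < n) (if (m : nat) == k then c m else 0) = if (k < n)%N then c k else 0.
Proof.
elim: n => [|n IH]; first by rewrite big_ord0.
rewrite big_ord_recr /= IH.
case: (ltngtP k n) => [kn|nk|<-].
- by rewrite addr0 ltnS ltnW.
- by rewrite addr0 ltnS leqNgt nk.
- by rewrite add0r ltnS leqnn.
Qed.

Lemma complex_ext (x y : C) : Re x = Re y -> Im x = Im y -> x = y.
Proof. by case: x y => ? ? [] /= ? ? -> ->. Qed.

Lemma ofRM a c : ofR a * ofR c = ofR (a * c) :> C.
Proof.
apply: complex_ext; rewrite ?ReM ?ImM /=; ring.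
Qed.

Lemma cvg_Re (u : nat -> C) l : (fun n => cabs (u n - l)) @ \oo --> 0 ->
  (fun n => Re (u n)) @ \oo --> Re l.
Proof.
move=> h; apply/cvgrPdist_lt => e e0; have [N HN] := cvg_small R h e e0.
exists N => // n /= Nn; have := HN n Nn.
rewrite ger0_norm ?cabs_ge0 // cabsB => H.
by apply: le_lt_trans H; rewrite -ReN -ReD; apply: Re_le.
Qed.

Lemma cvg_Im (u : nat -> C) l : (fun n => cabs (u n - l)) @ \oo --> 0 ->
  (fun n => Im (u n)) @ \oo --> Im l.
Proof.
move=> h; apply/cvgrPdist_lt => e e0; have [N HN] := cvg_small R h e e0.
exists N => // n /= Nn; have := HN n Nn.
rewrite ger0_norm ?cabs_ge0 // cabsB => H.
by apply: le_lt_trans H; rewrite -ImN -ImD; apply: Im_le.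
Qed.

Lemma coef (b : nat -> C) (F : C -> C) z (k : nat) : power_series_on b F (@disc R) ->
  cabs z < 1 ->
  ofR (2 * pi)^-1 * cint (fun t => F (z * cis t) * cis (- (k%:R) * t)) = b k * z ^+ k.
Proof.
move=> hps z1.
have [B HB] := abel_bound R b F z hps z1.
set S := fun n t => \sum_(m < n) (b m * z ^+ m) * cis ((m%:R - k%:R) * t).
set phi := fun t => F (z * cis t) * cis (- (k%:R) * t).
have eqS : forall n t,
    (\sum_(m < n) b m * (z * cis t) ^+ m) * cis (- (k%:R) * t) = S n t.
  move=> n t; rewrite mulr_suml; apply: eq_bigr => m _.
  by rewrite exprMn cisX mulrDl cisD !mulrA.
have bS : forall n t, cabs (S n t) <= B.
  move=> n t; rewrite /S; apply: (le_trans (cabs_sum n (fun m => (b m * z ^+ m) * cis ((m%:R - k%:R) * t)))); apply: le_trans (HB n).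
  by apply: ler_sum => m _; rewrite !cabsM cabsX cabs_cis mulr1.
have cvS : forall t, (fun n => cabs (S n t - phi t)) @ \oo --> 0.
  move=> t; have dz : disc (z * cis t) by rewrite /disc /= cabsM cabs_cis mulr1.
  have E : (fun n => cabs (S n t - phi t)) =
      (fun n => cabs (\sum_(m < n) b m * (z * cis t) ^+ m - F (z * cis t))).
    by apply/funext => n; rewrite -eqS /phi -mulrBl cabsM cabs_cis mulr1.
  by rewrite E; exact: (hps _ dz).
have ccS : forall n, ccont R (S n).
  move=> n; apply: (ccont_sum R n (fun m t => (b m * z ^+ m) * cis ((m%:R - k%:R) * t))) => m.
  by apply: ccontM; [exact: ccontC | exact: ccont_cis].
have intS : forall n, (k < n)%N -> cint (S n) = b k * z ^+ k * ofR (2 * pi).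
  move=> n kn; rewrite /S (cint_sum R n (fun m t => (b m * z ^+ m) * cis ((m%:R - k%:R) * t))); last first.
    by move=> m; apply: ccontM; [exact: ccontC | exact: ccont_cis].
  under eq_bigr do rewrite cint_mono.
  by rewrite (sum_if n k (fun i => b i * z ^+ i * ofR (2 * pi))) kn.
set X := b k * z ^+ k * ofR (2 * pi).
have ReI : \int[mu]_(x in @Iv R) Re (phi x) = Re X.
  apply: (@dct R (fun n t => Re (S n t)) (fun t => Re (phi t)) B (Re X) k.+1).
  - by move=> n; case: (ccS n).
  - by move=> t; exact: cvg_Re (cvS t).
  - by move=> n t; exact: le_trans (Re_le _ _) (bS n t).
  - by move=> n kn; rewrite /X -(intS n kn).
have ImI : \int[mu]_(x in @Iv R) Im (phi x) = Im X.
  apply: (@dct R (fun n t => Im (S n t)) (fun t => Im (phi t)) B (Im X) k.+1).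
  - by move=> n; case: (ccS n).
  - by move=> t; exact: cvg_Im (cvS t).
  - by move=> n t; exact: le_trans (Im_le _ _) (bS n t).
  - by move=> n kn; rewrite /X -(intS n kn).
have -> : cint phi = X by apply: complex_ext; rewrite /cint /= ?ReI ?ImI.
rewrite /X mulrCA ofRM mulVf; last by rewrite gt_eqF // pi2_gt0.
by rewrite (_ : ofR 1 = 1) // mulr1.
Qed.

End Aux6.

End M6.

Module M7.
Import M1 M2 M3 M4 M5 M6.
Import numFieldNormedType.Exports.
Local Open Scope ring_scope.
Local Open Scope classical_set_scope.
Section Aux7.
Variable R : realType.
Local Notation C := R[i].
Implicit Types (z w : C) (x y t r : R).
Local Notation Re := complex.Re.
Local Notation Im := complex.Im.

Lemma int_close x y : x \is a Num.int -> y \is a Num.int -> `|x - y| < 1 -> x = y.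
Proof.
move=> /intrP[m ->] /intrP[n ->]; rewrite -rmorphB /= -intr_norm.
rewrite (_ : 1 = 1%:~R) // ltr_int.
move=> h; congr intmul; apply/eqP; rewrite -subr_eq0 -normr_eq0.
by move: h; rewrite -[1]add0r ltzD1 => h; rewrite eq_le h normr_ge0.
Qed.

Lemma int_closure x : (forall e, 0 < e -> exists y, y \is a Num.int /\ `|x - y| < e) ->
  x \is a Num.int.
Proof.
move=> H.
have h2 : 0 < 1 / 2 :> R by lra.
have [y0 [iy0 h0]] := H (1/2) h2.
case: (eqVneq x y0) => [->//|ne].
set d := `|x - y0|.
have d0 : 0 < d by rewrite /d normr_gt0 subr_eq0.
have d2 : 0 < d / 2 by lra.
have [y [iy hy]] := H (d / 2) d2.
have yy0 : y = y0.
  apply: int_close => //.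
  have := ler_distD x y y0; rewrite [`|y - x|]distrC.
  move: h0; rewrite -/d => h0; lra.
move: hy; rewrite yy0 -/d; lra.
Qed.

Lemma ccvg_ev (u : nat -> C) l N : (forall n, (N <= n)%N -> u n = l) -> ccvg u l.
Proof.
move=> h; apply: cvg_near_cst; exists N => // n /= Nn.
by rewrite h // subrr cabs0.
Qed.

Lemma poly_ps (q : {poly C}) (A : set C) :
  power_series_on (fun m => q`_m) (fun z => q.[z]) A.
Proof.
move=> z _; apply: (@ccvg_ev _ _ (size q)) => n qn.
by rewrite (horner_coef_wide z qn).
Qed.

Lemma entire_poly (q : {poly C}) : entire (fun z => q.[z]).
Proof. by exists (fun m => q`_m); exact: poly_ps. Qed.

Lemma ps_sub (a c : nat -> C) (f g : C -> C) (A : set C) :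
  power_series_on a f A -> power_series_on c g A ->
  power_series_on (fun m => a m - c m) (fun z => f z - g z) A.
Proof.
move=> ha hc z Az; have h1 := ha z Az; have h2 := hc z Az.
apply/cvgrPdist_lt => e e0.
have e2 : 0 < e / 2 by lra.
have [N1 H1] := cvg_small R h1 _ e2; have [N2 H2] := cvg_small R h2 _ e2.
exists (maxn N1 N2) => // n /= Nn.
have n1 : (N1 <= n)%N by apply: leq_trans Nn; exact: leq_maxl.
have n2 : (N2 <= n)%N by apply: leq_trans Nn; exact: leq_maxr.
have := H1 n n1; have := H2 n n2.
rewrite sub0r normrN !ger0_norm ?cabs_ge0 //.
have -> : \sum_(k < n) (a k - c k) * z ^+ k - (f z - g z) =
    (\sum_(k < n) a k * z ^+ k - f z) - (\sum_(k < n) c k * z ^+ k - g z).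
  rewrite (eq_bigr (fun k : 'I_n => a k * z ^+ k - c k * z ^+ k)); last first.
    by move=> k _; rewrite mulrBl.
  rewrite sumrB; ring.
have := cabsD R (\sum_(k < n) a k * z ^+ k - f z) (- (\sum_(k < n) c k * z ^+ k - g z)).
rewrite cabsN; lra.
Qed.

Lemma bernoulli x n : 0 <= x -> 1 + n%:R * x <= (1 + x) ^+ n.
Proof.
move=> x0; elim: n => [|n IH]; first by rewrite mul0r addr0 expr0.
rewrite exprSr -natr1 mulrDl mul1r.
have h : 0 <= n%:R * x by rewrite mulr_ge0.
nra.
Qed.

End Aux7.

End M7.

Import M1 M2 M3 M4 M5 M6 M7.

Theorem corollary5p1 (R : realType) (X : set (R[i] -> R[i]))
  (nrm : (R[i] -> R[i]) -> R)
  (HX : BanachFunSpace X nrm) (H1 : rot_invariant X nrm)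
  (H2 : contains_entire X) (H3 : conv_ineq X nrm)
  (f : R[i] -> R[i]) (hf : X f) (hnp : ~ is_poly_on_disc f)
  (p : nat -> {poly R[i]}) (hp : forall n, int_poly n (p n))
  (hlim : (fun n => nrm (fun z => f z - (p n).[z])) @ \oo --> 0%R) :
  forall a : nat -> R[i], power_series_on a f (disc (R:=R)) ->
    (conv_radius a <= 1)%E.
Proof.
move=> a ha.
have GI : forall k, complex.Re (a k) \is a Num.int /\ complex.Im (a k) \is a Num.int.
  move=> k.
  set g := fun t : R => cis (- (k%:R) * t).
  have Lg : L1 g.
    by split; [exact: (cont_int R _ (cont_cosr R _)) | exact: (cont_int R _ (cont_sinr R _))].
  set mono := fun z : R[i] => z ^+ k.
  have Xmono : X mono.
    apply: H2; exists (fun m => (('X^k : {poly R[i]})`_m)).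
    have := poly_ps R 'X^k setT; congr power_series_on.
    by apply/funext => z; rewrite hornerXn.
  have mu0 : 0 < nrm mono.
    rewrite lt_neqAle (bfs_ge0 HX Xmono) andbT; apply/eqP => h.
    have h12 : cabs (ofR (1 / 2 : R)) = 1 / 2 by rewrite cabs_ofR //; lra.
    have d12 : disc (ofR (1 / 2 : R)) by rewrite /disc /= h12; lra.
    have := bfs_eq0 HX Xmono (esym h) d12; rewrite /mono => /eqP.
    rewrite expf_eq0 => /andP[_ /eqP h0].
    by move: h12; rewrite h0 cabs0; lra.
  set Cg := (2 * pi)^-1 * \int[lebesgue_measure]_(t in @Iv R) cabs (g t).
  have key : forall n, cabs (a k - (p n)`_k) * nrm mono <=
      Cg * nrm (fun z => f z - (p n).[z]).
    move=> n.
    set gn := fun z => f z - (p n).[z].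
    have Xgn : X gn.
      have := bfs_add HX hf (bfs_scale HX (-1) (H2 _ (entire_poly R (p n)))).
      by congr X; apply/funext => z; rewrite mulN1r.
    have psgn : power_series_on (fun m => a m - (p n)`_m) gn (@disc R).
      exact: (ps_sub R _ _ _ _ _ ha (poly_ps R (p n) _)).
    move: (H3 gn g Xgn Lg) => /= [Xh nh].
    have hE : forall z, disc z ->
        ofR (2 * pi)^-1 * cint (fun t => gn (z * cis t) * g t) = (a k - (p n)`_k) * mono z.
      by move=> z dz; exact: (coef R _ gn z k psgn dz).
    have := (bfs_local HX hE).2; rewrite (bfs_homog HX _ Xmono) => <-.
    exact: nh.
  have small : forall e, 0 < e -> exists n, cabs (a k - (p n)`_k) < e.
    move=> e e0.
    have pos : 0 < e * nrm mono / (`|Cg| + 1).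
      by rewrite divr_gt0 ?mulr_gt0 // ltr_pwDr // normr_ge0.
    have [N HN] := cvg_small R hlim _ pos.
    exists N; have := key N; have := HN N (leqnn N).
    set x := nrm _; set d := cabs _.
    have XN : X (fun z => f z - (p N).[z]).
      have := bfs_add HX hf (bfs_scale HX (-1) (H2 _ (entire_poly R (p N)))).
      by congr X; apply/funext => z; rewrite mulN1r.
    have x0 : 0 <= x by exact: (bfs_ge0 HX XN).
    rewrite ger0_norm // ltr_pdivlMr ?ltr_pwDr ?normr_ge0 // => h1 h2.
    have cg : Cg <= `|Cg| by apply: ler_norm.
    have ng : 0 <= `|Cg| by apply: normr_ge0.
    have d0 : 0 <= d by apply: cabs_ge0.
    nra.
  split; apply: int_closure => e e0; have [n hn] := small e e0.
  - exists (complex.Re (p n)`_k); split; first exact: ((hp n).2 k).1.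
    by rewrite -ReN -ReD; apply: le_lt_trans (Re_le _ _) hn.
  - exists (complex.Im (p n)`_k); split; first exact: ((hp n).2 k).2.
    by rewrite -ImN -ImD; apply: le_lt_trans (Im_le _ _) hn.
rewrite leNgt; apply/negP => hgt.
have [_ [r [r0 [M hM]] <-] r1] := ereal_sup_gt hgt.
rewrite lte_fin in r1.
have zeroK : exists K, forall k, (K <= k)%N -> a k = 0.
  have r10 : 0 < r - 1 by lra.
  have b0 : 0 <= `|M| / (r - 1) by rewrite divr_ge0 // ?normr_ge0 // ltW.
  exists (Num.Def.archi_bound (`|M| / (r - 1))) => k Kk.
  have hb := archi_boundP b0.
  have kb : (Num.Def.archi_bound (`|M| / (r - 1)))%:R <= k%:R :> R by rewrite ler_nat.
  have hk : `|M| < k%:R * (r - 1).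
    by rewrite -ltr_pdivrMr //; apply: lt_le_trans kb.
  have hbern := bernoulli R (r - 1) k (ltW r10).
  rewrite (_ : 1 + (r - 1) = r) in hbern; last by ring.
  have hMk := hM k.
  have Mn : M <= `|M| by apply: ler_norm.
  have rk0 : 0 < r ^+ k by apply: exprn_gt0; lra.
  have c1 : cabs (a k) < 1.
    have d0 := cabs_ge0 R (a k).
    nra.
  have i0 : (0 : R) \is a Num.int by apply: rpred0.
  apply: complex_ext.
  - apply: (int_close R _ _ (GI k).1 i0); rewrite subr0 /=.
    exact: le_lt_trans (Re_le _ _) c1.
  - apply: (int_close R _ _ (GI k).2 i0); rewrite subr0 /=.
    exact: le_lt_trans (Im_le _ _) c1.
have [K hK] := zeroK.
apply: hnp; exists (\poly_(i < K) a i) => z dz.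
set q := \poly_(i < K) a i.
have Pq : forall n, (K <= n)%N -> \sum_(m < n) a m * z ^+ m = q.[z].
  move=> n Kn; rewrite (horner_coef_wide z (leq_trans (size_poly K a) Kn)).
  apply: eq_bigr => i _; rewrite coef_poly.
  by case: ltnP => // Ki; rewrite hK.
apply/eqP; rewrite -subr_eq0; apply/eqP; apply: (cabs_eq0 R).
apply/eqP; rewrite eq_le cabs_ge0 andbT; apply/negP => /negP; rewrite -ltNge => c0.
have [N HN] := cvg_small R (ha z dz) _ c0.
have := HN (maxn N K) (leq_maxl _ _).
rewrite Pq ?leq_maxr // ger0_norm ?cabs_ge0 // cabsB; lra.
Qed.
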